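(* Let $\mathcal{Z}=(L,\prec)$ where $L\subseteq\{0,1,2,3\}^*$ is the regular language $\{\varepsilon\}\cup 2(0+2)^*\cup 2(0+2)^*(1+3)0^*\cup 30^*\cup 10^*$ and $\prec$ is the radix order on $L$ (shorter words first, words of equal length ordered lexicographically with $0\prec1\prec2\prec3$). Then $\mathcal{Z}$ is not addable, i.e. the set $\{(x,y,x+y):x,y\in\mathbb{N}\}$ is not $\mathcal{Z}$-recognizable.
   Context: For an ANS $(L,\prec)$, $\mathrm{rep}(n)$ is the $n$-th word of $L$ in the order $\prec$ (with $\mathrm{rep}(0)=\varepsilon$ here) and $\mathrm{val}=\mathrm{rep}^{-1}$. A triple $(n_1,n_2,n_3)$ is represented by left-padding $\mathrm{rep}(n_1),\mathrm{rep}(n_2),\mathrm{rep}(n_3)$ with a new symbol $\#$ to a common length and reading them in parallel as a word over $(\{0,1,2,3\}\cup\{\#\})^3$; a set of triples is $\mathcal{Z}$-recognizable if the set of its representations is a regular language. (This ANS is the Dumont–Thomas numeration system of the substitution $a\mapsto abab$, $b\mapsto b$.) *)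

(* Defs.v *)
From mathcomp Require Import all_boot.
Set Implicit Arguments. Unset Strict Implicit. Unset Printing Implicit Defensive.

Definition digit := 'I_4.
Definition word := seq digit.

Definition is02 (d : digit) : bool := (nat_of_ord d == 0) || (nat_of_ord d == 2).
Definition is13 (d : digit) : bool := (nat_of_ord d == 1) || (nat_of_ord d == 3).
Definition is0 (d : digit) : bool := nat_of_ord d == 0.

Definition inL (w : word) : bool :=
  [|| w == [::],
      (if w is d :: u then (nat_of_ord d == 2) && all is02 u else false),
      (* 2(0+2)^*(1+3)0^* *)
      (if w is d :: u then (nat_of_ord d == 2) &&
          has (fun i => [&& all is02 (take i u), is13 (nth d u i)
                          & all is0 (drop i.+1 u)]) (iota 0 (size u))
       else false),
      (if w is d :: u then (nat_of_ord d == 3) && all is0 u else false)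
    |
      (if w is d :: u then (nat_of_ord d == 1) && all is0 u else false)].

Definition digits : seq digit :=
  [:: @Ordinal 4 0 isT; @Ordinal 4 1 isT; @Ordinal 4 2 isT; @Ordinal 4 3 isT].

Fixpoint words_of_len (k : nat) : seq word :=
  if k is k'.+1 then [seq d :: w | d <- digits, w <- words_of_len k']
  else [:: [::]].

Definition words_upto (n : nat) : seq word :=
  flatten [seq words_of_len k | k <- iota 0 n.+1].

(** rep n = the n-th word (from 0, rep 0 = eps) of L in radix order.
    Since L has a word of every length (eps, 1 0^(k-1)), the first n+1
    words of L all have length <= n, so they appear in words_upto n. *)
Definition rep (n : nat) : word := nth [::] (filter inL (words_upto n)) n.

(** Letters of the triple alphabet: None stands for the padding symbol #. *)
Definition letter3 := (option digit * option digit * option digit)%type.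

Definition padl (m : nat) (w : word) : seq (option digit) :=
  nseq (m - size w) None ++ map Some w.

Definition pad3 (u v w : word) : seq letter3 :=
  let m := maxn (size u) (maxn (size v) (size w)) in
  zip (zip (padl m u) (padl m v)) (padl m w).

Definition rep3 (n1 n2 n3 : nat) : seq letter3 := pad3 (rep n1) (rep n2) (rep n3).

Record dfa (A : finType) := Dfa {
  dfa_state : finType;
  dfa_start : dfa_state;
  dfa_final : pred dfa_state;
  dfa_trans : dfa_state -> A -> dfa_state }.

Definition dfa_accepts (A : finType) (M : dfa A) (w : seq A) : bool :=
  @dfa_final A M (foldl (@dfa_trans A M) (@dfa_start A M) w).

Definition regular (A : finType) (P : seq A -> Prop) : Prop :=
  exists M : dfa A, forall w, P w <-> dfa_accepts M w.

Definition Z_recognizable (S : nat -> nat -> nat -> Prop) : Prop :=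
  regular (fun t : seq letter3 => exists n1 n2 n3, S n1 n2 n3 /\ t = rep3 n1 n2 n3).

(* Main.v *)
Require Import Defs.
From mathcomp Require Import all_boot.
From mathcomp Require Import zify.
Set Implicit Arguments. Unset Strict Implicit. Unset Printing Implicit Defensive.

Definition d0 : digit := @Ordinal 4 0 isT.
Definition d1 : digit := @Ordinal 4 1 isT.
Definition d2 : digit := @Ordinal 4 2 isT.
Definition d3 : digit := @Ordinal 4 3 isT.

Lemma wS k : words_of_len k.+1 =
  map (cons d0) (words_of_len k) ++ map (cons d1) (words_of_len k) ++
  map (cons d2) (words_of_len k) ++ map (cons d3) (words_of_len k).
Proof. by rewrite /= cats0. Qed.

Lemma size_words k w : w \in words_of_len k -> size w = k.
Proof.
elim: k w => [|k IH] w; first by rewrite inE => /eqP->.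
rewrite wS !mem_cat => /or4P [] /mapP [u /IH <- ->] //.
Qed.

Fixpoint inU (w : word) : bool :=
  if w is d :: u then (if is02 d then inU u else all is0 u) else true.

Fixpoint cU k := if k is k'.+1 then (cU k').*2.+2 else 1.

Lemma cU_E k : (cU k).+2 = 3 * 2 ^ k.
Proof. elim: k => [//|k IH]; rewrite /= expnS; lia. Qed.

Lemma cU_ge k : k < cU k.
Proof. elim: k => [//|k IH] /=; lia. Qed.

Fixpoint rU (w : word) : nat :=
  if w is d :: u then
    match nat_of_ord d with
    | 0 => rU u
    | 1 => cU (size u)
    | 2 => cU (size u) + 1 + rU u
    | _ => (cU (size u)).*2.+1
    end
  else 0.

Definition FU k := filter inU (words_of_len k).

Lemma filter_false (T : Type) (s : seq T) : filter (fun _ => false) s = [::].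
Proof. by elim: s. Qed.

Lemma F0 k : filter (all is0) (words_of_len k) = [:: nseq k d0].
Proof.
elim: k => [//|k IH].
rewrite wS !filter_cat !filter_map.
have ->: filter (preim (cons d0) (all is0)) (words_of_len k) = [:: nseq k d0] by [].
by rewrite !filter_false.
Qed.

Lemma FU_S k : FU k.+1 =
  map (cons d0) (FU k) ++ [:: d1 :: nseq k d0] ++
  map (cons d2) (FU k) ++ [:: d3 :: nseq k d0].
Proof.
rewrite /FU wS !filter_cat !filter_map.
have ->: filter (preim (cons d1) inU) (words_of_len k) = [:: nseq k d0] by rewrite -F0.
by [].
Qed.

Lemma size_FU k : size (FU k) = cU k.
Proof.
elim: k => [//|k IH]; rewrite FU_S !size_cat !size_map IH /=; lia.
Qed.

Lemma size_FU_elem k i : i < cU k -> size (nth [::] (FU k) i) = k.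
Proof.
move=> hi; apply: size_words.
have: nth [::] (FU k) i \in FU k by rewrite mem_nth // size_FU.
by rewrite mem_filter => /andP[].
Qed.

Lemma nth_FU k i : i < cU k -> rU (nth [::] (FU k) i) = i.
Proof.
elim: k i => [|k IH] i hi.
  by case: i hi.
rewrite FU_S.
have sF := size_FU k.
case: (ltnP i (cU k)) => h1.
  rewrite nth_cat size_map sF h1 (nth_map [::]) ?sF //=; exact: IH.
rewrite nth_cat size_map sF ltnNge h1 /=.
case hj: (i - cU k) => [|j] /=.
  rewrite size_nseq; lia.
rewrite nth_cat size_map sF.
case: (ltnP j (cU k)) => h2.
  rewrite (nth_map [::]) ?sF //= size_FU_elem // IH //; lia.
have ->: j - cU k = 0 by move: hi => /=; lia.
rewrite /= size_nseq; move: hi => /=; lia.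
Qed.

Lemma all0_nseq u : all is0 u -> u = nseq (size u) d0.
Proof.
elim: u => [//|d u IH] /= /andP[h0 /IH {1}->].
by congr cons; apply: val_inj; rewrite /= (eqP h0).
Qed.

Lemma FU_nth u : inU u -> rU u < cU (size u) /\ nth [::] (FU (size u)) (rU u) = u.
Proof.
elim: u => [//|[[|[|[|[|m]]]] hm] u IH] //=; rewrite /is02 /=.
- move=> /IH [h1 h2]; split; first lia.
  rewrite FU_S nth_cat size_map size_FU h1 (nth_map [::]) ?size_FU // h2.
  by congr cons; apply: val_inj.
- move=> /all0_nseq e; split; first lia.
  rewrite FU_S nth_cat size_map size_FU ltnn subnn /=.
  by rewrite {2}e; congr cons; apply: val_inj.
- move=> /IH [h1 h2]; split; first lia.
  rewrite FU_S nth_cat size_map size_FU.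
  have ->: cU (size u) + 1 + rU u < cU (size u) = false by lia.
  have ->: cU (size u) + 1 + rU u - cU (size u) = (rU u).+1 by lia.
  rewrite /= nth_cat size_map size_FU h1 (nth_map [::]) ?size_FU // h2.
  by congr cons; apply: val_inj.
- move=> /all0_nseq e; split; first lia.
  rewrite FU_S nth_cat size_map size_FU.
  have ->: (cU (size u)).*2.+1 < cU (size u) = false by lia.
  have ->: (cU (size u)).*2.+1 - cU (size u) = (cU (size u)).+1 by lia.
  rewrite /= nth_cat size_map size_FU ltnn subnn /=.
  by rewrite {2}e; congr cons; apply: val_inj.
Qed.

Lemma is13E (e : digit) : is13 e = ~~ is02 e.
Proof. by case: e => [[|[|[|[|m]]]] hm]. Qed.

Lemma has_inU (d : digit) u :
  all is02 u || has (fun i => [&& all is02 (take i u), is13 (nth d u i)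
                          & all is0 (drop i.+1 u)]) (iota 0 (size u)) = inU u.
Proof.
elim: u => [//|e u IH] /=.
rewrite -IH -(addn0 1) iotaDl has_map /= drop0 is13E.
have E: forall i, preim (addn 1) (fun i : nat =>
            [&& all is02 (take i (e :: u)), is13 (nth d (e :: u) i)
              & all is0 (drop i u)]) i =
   is02 e && [&& all is02 (take i u), is13 (nth d u i) & all is0 (drop i.+1 u)].
  by move=> i; rewrite /preim /= add1n /= add0n; case: (is02 e).
rewrite (eq_has E).
case: (is02 e) => /=.
  by [].
by rewrite has_pred0 orbF.
Qed.

Lemma inL_cons d u : inL (d :: u) =
  if nat_of_ord d == 1 then all is0 u else if nat_of_ord d == 2 then inU u
  else if nat_of_ord d == 3 then all is0 u else false.
Proof.
rewrite /inL -(has_inU d).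
case: d => [[|[|[|[|m]]]] hm] //=; rewrite ?orbF //.
Qed.

Lemma wU_S N : words_upto N.+1 = words_upto N ++ words_of_len N.+1.
Proof.
rewrite /words_upto.
have ->: N.+2 = N.+1 + 1 by rewrite addn1.
by rewrite iotaD map_cat flatten_cat /= cats0.
Qed.

Lemma FL_S k : filter inL (words_of_len k.+1) =
  [:: d1 :: nseq k d0] ++ map (cons d2) (FU k) ++ [:: d3 :: nseq k d0].
Proof.
rewrite wS !filter_cat !filter_map.
rewrite (@eq_filter _ (preim (cons d0) inL) pred0); last by move=> w; rewrite /= inL_cons.
rewrite (@eq_filter _ (preim (cons d1) inL) (all is0)); last by move=> w; rewrite /= inL_cons.
rewrite (@eq_filter _ (preim (cons d2) inL) inU); last by move=> w; rewrite /= inL_cons.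
rewrite (@eq_filter _ (preim (cons d3) inL) (all is0)); last by move=> w; rewrite /= inL_cons.
by rewrite filter_pred0 F0.
Qed.

Lemma size_FL N : size (filter inL (words_upto N)) = cU N.
Proof.
elim: N => [//|N IH].
rewrite wU_S filter_cat size_cat IH FL_S /= size_cat size_map size_FU /=; lia.
Qed.

Lemma nth_L N i : i < cU N -> rU (nth [::] (filter inL (words_upto N)) i) = i.
Proof.
elim: N i => [|N IH] i hi; first by case: i hi.
rewrite wU_S filter_cat nth_cat size_FL.
case: (ltnP i (cU N)) => h1; first exact: IH.
rewrite FL_S.
case hj: (i - cU N) => [|j] /=.
  rewrite size_nseq; lia.
rewrite nth_cat size_map size_FU.
case: (ltnP j (cU N)) => h2.
  rewrite (nth_map [::]) ?size_FU //= size_FU_elem // nth_FU //; lia.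
have ->: j - cU N = 0 by move: hi => /=; lia.
rewrite /= size_nseq; move: hi => /=; lia.
Qed.

Lemma cU_mono m n : m <= n -> cU m <= cU n.
Proof.
move=> /subnK <-; elim: (n - m) => [//|k IH]; rewrite addSn /=; lia.
Qed.

Lemma L_nth N w : inL w -> size w <= N ->
  rU w < cU N /\ nth [::] (filter inL (words_upto N)) (rU w) = w.
Proof.
elim: N w => [|N IH] w hw hs.
  by case: w hw hs.
case: (ltnP (size w) N.+1) => h.
  have [h1 h2] := IH w hw h.
  split; first by apply: (leq_trans h1); apply: cU_mono.
  by rewrite wU_S filter_cat nth_cat size_FL h1.
have {h}hs: size w = N.+1 by apply/eqP; rewrite eqn_leq hs h.
case: w hw hs => [//|[[|[|[|[|m]]]] hm] u] hw [hs] //; rewrite inL_cons /= in hw.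
- have e := all0_nseq hw.
  have ->: rU (Ordinal hm :: u) = cU N by rewrite /= hs.
  split; first by rewrite /=; lia.
  rewrite wU_S filter_cat nth_cat size_FL ltnNge leqnn subnn FL_S.
  by rewrite /= e hs; congr cons; apply: val_inj.
- have [h1 h2] := FU_nth hw.
  have ->: rU (Ordinal hm :: u) = cU N + 1 + rU u by rewrite /= hs.
  split; first by move: h1; rewrite hs /=; lia.
  rewrite wU_S filter_cat nth_cat size_FL.
  have ->: cU N + 1 + rU u < cU N = false by lia.
  have ->: cU N + 1 + rU u - cU N = (rU u).+1 by lia.
  rewrite FL_S /= nth_cat size_map size_FU -hs h1 (nth_map [::]) ?size_FU // h2.
  by congr cons; apply: val_inj.
- have e := all0_nseq hw.
  have ->: rU (Ordinal hm :: u) = (cU N).*2.+1 by rewrite /= hs.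
  split; first by rewrite /=; lia.
  rewrite wU_S filter_cat nth_cat size_FL.
  have ->: (cU N).*2.+1 < cU N = false by lia.
  have ->: (cU N).*2.+1 - cU N = (cU N).+1 by lia.
  rewrite FL_S /= nth_cat size_map size_FU ltnn subnn /=.
  by rewrite e hs; congr cons; apply: val_inj.
Qed.

Lemma rep_rU w : inL w -> rep (rU w) = w.
Proof.
move=> hw; rewrite /rep; apply: (proj2 (L_nth hw _)).
case: w hw => [//|[[|[|[|[|m]]]] hm] u] hw //=; have := cU_ge (size u); lia.
Qed.

Lemma rU_rep n : rU (rep n) = n.
Proof. by rewrite /rep nth_L // cU_ge. Qed.

Lemma rU_nseq0 n u : rU (nseq n d0 ++ u) = rU u.
Proof. by elim: n. Qed.

Lemma rU_nseq2 n u :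
  rU (nseq n d2 ++ u) + n + 3 * 2 ^ (size u) = rU u + 3 * 2 ^ (size u) * 2 ^ n.
Proof.
elim: n => [|n IH]; first by rewrite /= addn0 muln1.
rewrite /= size_cat size_nseq.
have := cU_E (n + size u); rewrite expnD expnS; lia.
Qed.

Lemma inU_cat s u : all is02 s -> inU (s ++ u) = inU u.
Proof. by elim: s => [//|d s IH] /= /andP[-> /IH]. Qed.

Definition xw p q : word := nseq p.+2 d2 ++ nseq q d0.
Definition zw p q : word := nseq p.+1 d2 ++ d0 :: (nseq q d2 ++ [:: d3]).

Lemma all02_nseq n d : is02 d -> all is02 (nseq n d).
Proof. by move=> h; elim: n => //= n ->; rewrite h. Qed.

Lemma inL_xw p q : inL (xw p q).
Proof.
rewrite /xw /= inL_cons /= inU_cat ?all02_nseq //.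
by rewrite -(cats0 (nseq q d0)) inU_cat ?all02_nseq.
Qed.

Lemma inL_zw p q : inL (zw p q).
Proof.
by rewrite /zw /= inL_cons /= inU_cat ?all02_nseq //= inU_cat ?all02_nseq.
Qed.

Lemma rU_xw p q : rU (xw p q) + p.+2 + 3 * 2 ^ q = 3 * 2 ^ q * 2 ^ p.+2.
Proof.
have h := rU_nseq2 p.+2 (nseq q d0).
have h0: rU (nseq q d0) = 0 by elim: q {h}.
rewrite size_nseq h0 in h; rewrite /xw; lia.
Qed.

Lemma rU_zw p q : rU (zw p q) + p.+1 + 3 * 2 ^ q.+2 + q + 6 =
  3 + 3 * 2 * 2 ^ q + 3 * 2 ^ q.+2 * 2 ^ p.+1.
Proof.
have h1 := rU_nseq2 p.+1 (d0 :: (nseq q d2 ++ [:: d3])).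
have h2 := rU_nseq2 q [:: d3].
have e1: size (d0 :: (nseq q d2 ++ [:: d3])) = q.+2 by rewrite /= size_cat size_nseq addn1.
have e2: rU (d0 :: (nseq q d2 ++ [:: d3])) = rU (nseq q d2 ++ [:: d3]) by [].
have e3: rU [:: d3] = 3 by [].
rewrite e1 e2 in h1; rewrite e3 /= in h2; rewrite /zw; lia.
Qed.

Lemma arith p q : rU (zw p q) = rU (xw p q) + rU (xw p q) -> p = q.
Proof.
have h1 := rU_xw p q; have h2 := rU_zw p q.
move: h1 h2; rewrite !expnS.
set A := 2 ^ p; set B := 2 ^ q.
nia.
Qed.

Definition up1 (t : seq letter3) : word := pmap id (unzip1 (unzip1 t)).
Definition up2 (t : seq letter3) : word := pmap id (unzip2 (unzip1 t)).
Definition up3 (t : seq letter3) : word := pmap id (unzip2 t).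

Lemma size_padl m s : size s <= m -> size (padl m s) = m.
Proof. by move=> h; rewrite /padl size_cat size_nseq size_map subnK. Qed.

Lemma pmap_padl m s : pmap id (padl m s) = s.
Proof.
rewrite /padl pmap_cat.
have ->: pmap id (nseq (m - size s) (@None digit)) = [::] by elim: (m - size s).
by elim: s => //= d s ->.
Qed.

Lemma up_pad u v w :
  [/\ up1 (pad3 u v w) = u, up2 (pad3 u v w) = v & up3 (pad3 u v w) = w].
Proof.
rewrite /up1 /up2 /up3 /pad3.
set m := maxn _ _.
have hu: size u <= m by rewrite leq_maxl.
have hv: size v <= m by rewrite /m (leq_trans (leq_maxl _ (size w))) // leq_maxr.
have hw: size w <= m by rewrite /m (leq_trans (leq_maxr (size v) _)) // leq_maxr.
have s1 := size_padl hu; have s2 := size_padl hv; have s3 := size_padl hw.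
have sz: size (zip (padl m u) (padl m v)) = m by rewrite size_zip s1 s2 minnn.
have z1: unzip1 (zip (zip (padl m u) (padl m v)) (padl m w)) = zip (padl m u) (padl m v)
  by apply: unzip1_zip; rewrite sz s3.
have z2: unzip2 (zip (zip (padl m u) (padl m v)) (padl m w)) = padl m w
  by apply: unzip2_zip; rewrite sz s3.
have z3: unzip1 (zip (padl m u) (padl m v)) = padl m u by apply: unzip1_zip; rewrite s1 s2.
have z4: unzip2 (zip (padl m u) (padl m v)) = padl m v by apply: unzip2_zip; rewrite s1 s2.
by rewrite z1 z2 z3 z4; split; apply: pmap_padl.
Qed.

Definition S2 : option digit := Some d2.
Definition Pw p : seq letter3 :=
  zip (zip (None :: nseq p S2) (None :: nseq p S2)) (nseq p.+1 S2).
Definition Sw q : seq letter3 :=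
  zip (zip (S2 :: S2 :: nseq q (Some d0)) (S2 :: S2 :: nseq q (Some d0)))
      (Some d0 :: nseq q S2 ++ [:: Some d3]).

Lemma W_cat p q : pad3 (xw p q) (xw p q) (zw p q) = Pw p ++ Sw q.
Proof.
rewrite /pad3; cbv zeta.
have sx: size (xw p q) = p + q + 2 by rewrite /xw size_cat !size_nseq; lia.
have sz: size (zw p q) = p + q + 3 by rewrite /zw size_cat /= size_cat !size_nseq /=; lia.
rewrite sx sz.
have ->: maxn (p + q + 2) (maxn (p + q + 2) (p + q + 3)) = p + q + 3 by lia.
have ->: padl (p + q + 3) (xw p q) =
   (None :: nseq p S2) ++ (S2 :: S2 :: nseq q (Some d0)).
  rewrite /padl sx.
  have ->: p + q + 3 - (p + q + 2) = 1 by lia.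
  rewrite /xw map_cat !map_nseq /=; congr cons; rewrite /S2; clear; by elim: p => //= p ->.
have ->: padl (p + q + 3) (zw p q) =
   nseq p.+1 S2 ++ (Some d0 :: nseq q S2 ++ [:: Some d3]).
  rewrite /padl sz subnn /= /zw map_cat !map_nseq /= map_cat map_nseq //.
rewrite zip_cat // zip_cat // size_zip /= size_nseq minnn //.
Qed.

Lemma W_not p q n1 n2 n3 : n3 = n1 + n2 ->
  pad3 (xw p q) (xw p q) (zw p q) = rep3 n1 n2 n3 -> p = q.
Proof.
move=> e h.
have [a1 a2 a3] := up_pad (xw p q) (xw p q) (zw p q).
have [b1 b2 b3] := up_pad (rep n1) (rep n2) (rep n3).
move: h; rewrite /rep3 => h.
rewrite -h a1 in b1; rewrite -h a2 in b2; rewrite -h a3 in b3.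
apply: arith.
have e2: n2 = n1 by rewrite -(rU_rep n2) -b2 b1 rU_rep.
by rewrite b3 b1 !rU_rep e e2.
Qed.

Lemma W_yes q : exists n1 n2 n3, n3 = n1 + n2 /\
  pad3 (xw q q) (xw q q) (zw q q) = rep3 n1 n2 n3.
Proof.
exists (rU (xw q q)), (rU (xw q q)), (rU (zw q q)); split.
  have h1 := rU_xw q q; have h2 := rU_zw q q.
  move: h1 h2; rewrite !expnS.
  set A := 2 ^ q.
  nia.
by rewrite /rep3 !rep_rU ?inL_xw ?inL_zw.
Qed.

Theorem mainTheorem10 :
  ~ Z_recognizable (fun x y z => z = x + y).
Proof.
case=> M HM.
pose st (p : nat) := foldl (@dfa_trans _ M) (@dfa_start _ M) (Pw p).
pose f (i : 'I_#|dfa_state M|.+1) := st (nat_of_ord i).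
have: ~~ injectiveb f.
  apply/negP => /injectiveP /leq_card.
  by rewrite card_ord ltnn.
case/injectivePn => i [j] hij hf.
have acc: forall p q, dfa_accepts M (Pw p ++ Sw q) =
   @dfa_final _ M (foldl (@dfa_trans _ M) (st p) (Sw q)).
  by move=> p q; rewrite /dfa_accepts foldl_cat.
have hj: dfa_accepts M (Pw j ++ Sw j).
  by apply/HM; rewrite -W_cat; apply: W_yes.
have hi: dfa_accepts M (Pw i ++ Sw j).
  by rewrite acc; move: hj; rewrite acc /f in hf *; rewrite -/(st i) -/(st j) hf.
move/HM: hi => [n1 [n2 [n3 [e h]]]].
rewrite -W_cat in h.
move/negP: hij; apply; apply/eqP/val_inj.
exact: (W_not e h).
Qed.
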